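(* Let $R$ be a $*$-ring. Then $R$ is strongly $*$-clean and $\pi$-regular if and only if $R$ is strongly $\pi$-$*$-regular.
   Context: A $*$-ring is a ring with identity with an involution $*$. A projection is $p$ with $p^2=p=p^*$. $R$ is strongly $*$-clean if each element is a sum of a projection and a unit commuting with each other. $R$ is $\pi$-regular if for each $a$ there exist $n\ge1$ and $b$ with $a^n=a^nba^n$. $R$ is strongly $\pi$-$*$-regular if for every $a$ there exist a projection $e$, a unit $u$ and $m\ge1$ with $a^m=eu$ and $a,e,u$ pairwise commuting. *)

(* Defs.v *)
From mathcomp Require Import all_boot all_algebra.
Set Implicit Arguments. Unset Strict Implicit. Unset Printing Implicit Defensive.
Import GRing.Theory.
Local Open Scope ring_scope.

Definition is_star_involution (R : pzRingType) (s : R -> R) : Prop :=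
  (forall x y : R, s (x + y) = s x + s y) /\
  (forall x y : R, s (x * y) = s y * s x) /\
  (forall x : R, s (s x) = x).

Definition is_projection (R : pzRingType) (s : R -> R) (p : R) : Prop :=
  p * p = p /\ s p = p.

Definition is_unit (R : pzRingType) (u : R) : Prop :=
  exists v : R, u * v = 1 /\ v * u = 1.

Definition strongly_star_clean (R : pzRingType) (s : R -> R) : Prop :=
  forall a : R, exists e u : R,
    [/\ is_projection s e, is_unit u, a = e + u & e * u = u * e].

Definition pi_regular (R : pzRingType) : Prop :=
  forall a : R, exists (n : nat) (b : R),
    (1 <= n)%N /\ a ^+ n = a ^+ n * b * a ^+ n.

Definition strongly_pi_star_regular (R : pzRingType) (s : R -> R) : Prop :=
  forall a : R, exists (e u : R) (m : nat),
    [/\ is_projection s e, is_unit u, (1 <= m)%N, a ^+ m = e * u &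
        [/\ a * e = e * a, a * u = u * a & e * u = u * e]].

(* Main.v *)
Require Import Defs.
From mathcomp Require Import all_boot all_algebra.
Set Implicit Arguments. Unset Strict Implicit. Unset Printing Implicit Defensive.
Import GRing.Theory.
Local Open Scope ring_scope.

Section Aux.
Lemma s_0 (R : pzRingType) (s : R -> R) : is_star_involution s -> s 0 = 0.
Proof.
move=> [sD _]; have h := sD 0 0; rewrite addr0 in h.
by apply: (addrI (s 0)); rewrite addr0 -h.
Qed.

Lemma s_N (R : pzRingType) (s : R -> R) : is_star_involution s ->
  forall x, s (- x) = - s x.
Proof.
move=> Hs x; have h := (proj1 Hs) x (- x); rewrite subrr (s_0 Hs) in h.
by apply/eqP; rewrite -addr_eq0 addrC -h.
Qed.

Lemma s_1 (R : pzRingType) (s : R -> R) : is_star_involution s -> s 1 = 1.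
Proof.
move=> [_ [sM sK]]; have h := sM (s 1) 1.
by rewrite mulr1 !sK mulr1 in h.
Qed.

Lemma s_B (R : pzRingType) (s : R -> R) : is_star_involution s ->
  forall x y, s (x - y) = s x - s y.
Proof. by move=> Hs x y; rewrite (proj1 Hs) (s_N Hs). Qed.

Lemma unit_comm (R : pzRingType) (u v c : R) : u * v = 1 -> v * u = 1 ->
  c * u = u * c -> c * v = v * c.
Proof.
move=> uv vu cu.
have -> : c * v = v * u * c * v by rewrite vu mul1r.
by rewrite -(mulrA v u) -cu -!mulrA uv mulr1.
Qed.

Lemma idem_proj (R : pzRingType) (s : R -> R) : is_star_involution s ->
  strongly_star_clean s -> forall f : R, f * f = f -> s f = f.
Proof.
move=> Hs Hc f ff.
have [p [u [[pp sp] [v [uv vu]] fpu pu]]] := Hc f.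
have eu : u = f - p by rewrite fpu addrAC subrr add0r.
have pf : p * f = f * p by rewrite fpu mulrDr mulrDl pp pu.
have h0 : u * (f * p) = 0.
  by rewrite eu mulrBl !mulrA ff pf -mulrA pp subrr.
have fp0 : f * p = 0 by rewrite -[f * p]mul1r -vu -mulrA h0 mulr0.
have h1 : u * (f + p) = u.
  by rewrite eu mulrBl !mulrDr ff fp0 pf fp0 pp addr0 add0r.
have fp1 : f + p = 1 by rewrite -[f + p]mul1r -vu -mulrA h1.
have -> : f = 1 - p by rewrite -fp1 addrK.
by rewrite (s_B Hs) (s_1 Hs) sp.
Qed.

Lemma idem_side (R : pzRingType) (s : R -> R) : is_star_involution s ->
  strongly_star_clean s -> forall e x : R, e * e = e -> e * x * (1 - e) = 0.
Proof.
move=> Hs Hc e x ee.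
have ce : (1 - e) * e = 0 by rewrite mulrBl mul1r ee subrr.
have ec : e * (1 - e) = 0 by rewrite mulrBr mulr1 ee subrr.
set X := e * x * (1 - e).
have eX : e * X = X by rewrite /X !mulrA ee.
have Xe : X * e = 0 by rewrite /X -mulrA ce mulr0.
have ff : (e + X) * (e + X) = e + X.
  have XX : X * X = 0 by rewrite -{2}eX mulrA Xe mul0r.
  by rewrite mulrDl !mulrDr ee eX Xe XX add0r addr0.
have sf := idem_proj Hs Hc ff.
have se := idem_proj Hs Hc ee.
have [sD [sM sK]] := Hs.
rewrite sD se /X !sM (s_B Hs) (s_1 Hs) se -/X in sf.
have h : (1 - e) * (s x * e) = X by apply: (addrI e); exact: sf.
by rewrite -eX -h mulrA ec mul0r.
Qed.

Lemma idem_central (R : pzRingType) (s : R -> R) : is_star_involution s ->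
  strongly_star_clean s -> forall e x : R, e * e = e -> e * x = x * e.
Proof.
move=> Hs Hc e x ee.
have h1 := idem_side Hs Hc x ee.
have ee' : (1 - e) * (1 - e) = 1 - e.
  by rewrite mulrBl !mulrBr !mul1r !mulr1 ee subrr subr0.
have h2 := idem_side Hs Hc x ee'.
rewrite (_ : 1 - (1 - e) = e) in h2; last by rewrite opprB addrC subrK.
have a1 : e * x = e * x * e.
  by apply/eqP; rewrite -subr_eq0 -[X in X - _]mulr1 -mulrBr h1.
have a2 : x * e = e * x * e.
  by apply/eqP; rewrite -subr_eq0 -[X in X - _]mul1r -!mulrA -mulrBl mulrA h2.
by rewrite a1 a2.
Qed.

Lemma forward (R : pzRingType) (s : R -> R) : is_star_involution s ->
  strongly_star_clean s -> pi_regular R -> strongly_pi_star_regular s.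
Proof.
move=> Hs Hc Hp a.
have [n [b [n1 hA]]] := Hp a.
have cA : GRing.comm a (a ^+ n) by apply: commrX.
have [A EA] : {A | A = a ^+ n} by exists (a ^+ n).
rewrite -EA in hA cA.
have [f Ef] : {f | f = A * b} by exists (A * b).
have ff : f * f = f by rewrite Ef mulrA -hA.
have [e' Ee] : {e' | e' = b * A} by exists (b * A).
have ee : e' * e' = e' by rewrite Ee -mulrA (mulrA A b A) -hA.
have cf : forall x, f * x = x * f := fun x => @idem_central _ _ Hs Hc f x ff.
have ce : forall x, e' * x = x * e' := fun x => @idem_central _ _ Hs Hc e' x ee.
have fA : f * A = A by rewrite Ef -hA.
have Ae : A * e' = A by rewrite Ee mulrA -hA.
have fe : f = e' * f.
  by rewrite {1}Ef -{1}Ae -(ce A) -mulrA -Ef.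
have ef : e' = f * e'.
  by rewrite {1}Ee {1}hA !mulrA -(mulrA b A b) -Ef -cf -mulrA -Ee.
have e'f : e' = f by rewrite ef -ce -fe.
exists f, (A + (1 - f)), n; split => //.
- by split=> //; apply: (idem_proj Hs Hc ff).
- have g1 : (1 - f) * f = 0 by rewrite mulrBl mul1r ff subrr.
  have g2 : f * (1 - f) = 0 by rewrite mulrBr mulr1 ff subrr.
  have g3 : (1 - f) * (1 - f) = 1 - f by rewrite mulrBr mulr1 g1 subr0.
  have g4 : A * (1 - f) = 0 by rewrite mulrBr mulr1 -cf fA subrr.
  have g5 : (1 - f) * A = 0 by rewrite mulrBl mul1r fA subrr.
  exists (f * b * f + (1 - f)); split.
  + rewrite mulrDl (mulrDr A) (mulrDr (1 - f)) g4 g3 addr0.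
    have -> : A * (f * b * f) = f by rewrite !mulrA -(cf A) fA -Ef ff.
    have -> : (1 - f) * (f * b * f) = 0 by rewrite !mulrA g1 !mul0r.
    by rewrite add0r subrKC.
  + rewrite mulrDl (mulrDr (f * b * f)) (mulrDr (1 - f)) g5 g3 add0r.
    have -> : f * b * f * A = f by rewrite -mulrA fA -mulrA -Ee e'f ff.
    have -> : f * b * f * (1 - f) = 0 by rewrite -mulrA g2 mulr0.
    by rewrite addr0 subrKC.
- by rewrite -EA mulrDr (mulrBr f) mulr1 ff subrr addr0 fA.
- split; first by rewrite cf.
  + have caf : GRing.comm a f by rewrite /GRing.comm cf.
    by apply: commrD => //; apply: commrB => //; apply: commr1.
  + by rewrite mulrDr mulrDl cf (mulrBr f) (mulrBl f) mulr1 mul1r.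
Qed.

Fixpoint geo (R : pzRingType) (n : R) (k : nat) : R :=
  match k with 0%N => 0 | k'.+1 => 1 + n * geo n k' end.

Lemma geoL (R : pzRingType) (n : R) k : (1 - n) * geo n k = 1 - n ^+ k.
Proof.
elim: k => [|k IH] /=; first by rewrite mulr0 expr0 subrr.
have c : (1 - n) * n = n * (1 - n) by rewrite mulrBl mulrBr mul1r mulr1.
by rewrite mulrDr mulr1 mulrA c -mulrA IH mulrBr mulr1 -exprS addrA subrK.
Qed.

Lemma geoR (R : pzRingType) (n : R) k : geo n k * (1 - n) = 1 - n ^+ k.
Proof.
elim: k => [|k IH] /=; first by rewrite mul0r expr0 subrr.
by rewrite mulrDl mul1r -mulrA IH mulrBr mulr1 -exprS addrA subrK.
Qed.

Lemma geoC (R : pzRingType) (n c : R) k : GRing.comm c n -> GRing.comm c (geo n k).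
Proof.
move=> h; elim: k => [|k IH] /=; first exact: commr0.
by apply: commrD; [apply: commr1 | apply: commrM].
Qed.

Lemma idemX (R : pzRingType) (g : R) k : g * g = g -> g ^+ k.+1 = g.
Proof. by move=> gg; elim: k => [|k IH]; [rewrite expr1 | rewrite exprS IH gg]. Qed.

Lemma backward (R : pzRingType) (s : R -> R) : is_star_involution s ->
  strongly_pi_star_regular s -> strongly_star_clean s /\ pi_regular R.
Proof.
move=> Hs Hr; split => a; have [e [u [m [[ee se] [v [uv vu]] m1 am [ae au eu]]]]] := Hr a.
- have cva : GRing.comm a v by apply: (unit_comm uv vu au).
  have cve : e * v = v * e by apply: (unit_comm uv vu eu).
  case: m m1 am => // k _ am.
  have [g Eg] : {g | g = 1 - e} by exists (1 - e).
  have gg : g * g = g by rewrite Eg mulrBl !mulrBr !mul1r !mulr1 ee subrr subr0.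
  have ge : g * e = 0 by rewrite Eg mulrBl mul1r ee subrr.
  have eg : e * g = 0 by rewrite Eg mulrBr mulr1 ee subrr.
  have eg1 : e + g = 1 by rewrite Eg subrKC.
  have cag : GRing.comm a g by rewrite Eg; apply: commrB; [apply: commr1|].
  have [y Ey] : {y | y = a ^+ k * v * e} by exists (a ^+ k * v * e).
  have ay : a * y = e.
    by rewrite Ey !mulrA -exprS am -(mulrA e u v) uv mulr1 ee.
  have cay : GRing.comm a y.
    by rewrite Ey; apply: commrM; [apply: commrM; [apply: commrX; apply: commr_refl|]|].
  have ya : y * a = e by rewrite -cay ay.
  have ye : y * e = y by rewrite Ey -mulrA ee.
  have cey : GRing.comm e y.
    rewrite Ey; apply: commrM; [apply: commrM; [apply: commrX|]|].
    - exact/commr_sym.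
    - exact: cve.
    - exact: commr_refl.
  have yg : y * g = 0 by rewrite Eg mulrBr mulr1 ye subrr.
  have gy : g * y = 0 by rewrite Eg mulrBl mul1r cey ye subrr.
  have [n En] : {n | n = g * a} by exists (g * a).
  have nm : n ^+ k.+1 = 0.
    by rewrite En exprMn_comm; [rewrite idemX // am mulrA ge mul0r | exact/commr_sym].
  have can : GRing.comm a n by rewrite En; apply: commrM; [exact: cag|exact: commr_refl].
  have cgn : GRing.comm g n by rewrite En /GRing.comm -(mulrA g a g) cag.
  set S := geo n k.+1.
  have K : g * S - n * S = g.
    rewrite -mulrBl (_ : g - n = g * (1 - n)); last by rewrite mulrBr mulr1 En mulrA gg.
    by rewrite -mulrA geoL nm subr0 mulr1.
  have agn : a * g = n by rewrite cag En.
  exists g, (a - g); split.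
  + split => //; by rewrite Eg (s_B Hs) (s_1 Hs) se.
  + exists (y - g * S); split.
    * rewrite mulrBl (mulrBr a) (mulrBr g) ay mulrA agn gy mulrA gg sub0r opprK.
      by rewrite -addrA (addrC (- _)) K eg1.
    * rewrite mulrBl (mulrBr y) (mulrBr (g * S)) ya yg subr0.
      have -> : g * S * a = n * S.
        by rewrite -mulrA -(geoC k.+1 can) mulrA -En.
      have -> : g * S * g = g * S.
        by rewrite -mulrA -(geoC k.+1 cgn) mulrA gg.
      by rewrite opprB K eg1.
  + by rewrite subrKC.
  + by apply: commrB; [exact/commr_sym|exact: commr_refl].
- exists m, v; split => //.
  by rewrite am -(mulrA e u v) uv mulr1 mulrA ee.
Qed.
End Aux.

Theorem corollary3p8 (R : pzRingType) (s : R -> R) :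
  is_star_involution s ->
  (strongly_star_clean s /\ pi_regular R <-> strongly_pi_star_regular s).
Proof.
move=> Hs; split; first by move=> [Hc Hp]; apply: forward.
exact: backward.
Qed.
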